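(* Fix an integer $b>1$. For each positive integer $m$, let $k_m=r+1$, where $r\ge 0$ is the exponent with $b^r\mid m$ and $b^{r+1}\nmid m$. Then, as formal power series in $q$, $$\sum_{n=0}^\infty p(n)q^n \equiv \prod_{m=1}^\infty \left(1+q^m+q^{2m}+\cdots+q^{(b-1)m}\right)^{k_m} \pmod{b},$$ where the congruence means that the coefficients of $q^n$ agree modulo $b$ for every $n$. Equivalently, the number of partitions of $n$ is congruent modulo $b$ to the number of partitions of $n$ in which, for each $m$, parts of size $m$ come in $k_m$ distinct types and each type of part of size $m$ appears at most $b-1$ times.
   Context: $p(n)$ denotes the number of partitions of $n$, with $p(0)=1$. *)

(* Defs.v *)
From mathcomp Require Import all_boot all_order all_algebra.
Set Implicit Arguments. Unset Strict Implicit. Unset Printing Implicit Defensive.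
Import GRing.Theory Num.Theory.

(* A partition of n is encoded by its multiplicity function:
   f i = number of parts equal to i (0 <= i <= n), with no parts of size 0
   and \sum_i i * f i = n.  Multiplicities are at most n, so 'I_n.+1 suffices.
   partition_count n = p(n); in particular partition_count 0 = 1. *)
Definition partition_count (n : nat) : nat :=
  #|[set f : {ffun 'I_n.+1 -> 'I_n.+1} |
       (val (f ord0) == 0%N) && (\sum_(i < n.+1) (i * f i)%N == n)]|.

(* Main.v *)
Require Import Defs.
From mathcomp Require Import all_boot all_order all_algebra.
From mathcomp Require Import ring zify.
Import GRing.Theory Num.Theory.
Local Open Scope ring_scope.

Definition cong (n : nat) (p q : {poly int}) := exists r, p = q + 'X^(n.+1) * r.

Lemma cong_refl n p : cong n p p.
Proof. by exists 0; rewrite mulr0 addr0. Qed.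

Lemma cong_sym n p q : cong n p q -> cong n q p.
Proof. by move=> [r ->]; exists (- r); ring. Qed.

Lemma cong_trans n p q s : cong n p q -> cong n q s -> cong n p s.
Proof. by move=> [r ->] [t ->]; exists (t + r); ring. Qed.

Lemma cong_mul n p q p' q' : cong n p q -> cong n p' q' -> cong n (p * p') (q * q').
Proof.
move=> [r ->] [t ->]; exists (r * q' + q * t + 'X^(n.+1) * r * t); ring.
Qed.

Lemma cong_coef n p q i : cong n p q -> (i <= n)%N -> p`_i = q`_i.
Proof.
move=> [r ->] hi; rewrite coefD coefXnM.
by have -> : (i < n.+1)%N by []; rewrite addr0.
Qed.

Lemma cong_big n (I : Type) (r : seq I) (P : pred I) (F G : I -> {poly int}) :
  (forall i, P i -> cong n (F i) (G i)) ->
  cong n (\prod_(i <- r | P i) F i) (\prod_(i <- r | P i) G i).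
Proof.
move=> h; apply: (big_ind2 (cong n)) => //; first exact: cong_refl.
by move=> ????; apply: cong_mul.
Qed.

Lemma cong_big1 n (I : Type) (r : seq I) (P : pred I) (F : I -> {poly int}) :
  (forall i, P i -> cong n (F i) 1) -> cong n (\prod_(i <- r | P i) F i) 1.
Proof.
move=> h; have := @cong_big n I r P F (fun=> 1) h; by rewrite big1_eq.
Qed.

Lemma cong_1X n M p : (n < M)%N -> cong n (1 + 'X^M * p) 1.
Proof.
move=> h; exists ('X^(M - n.+1) * p).
by rewrite mulrA -exprD subnKC.
Qed.

Lemma cong_1mX n M : (n < M)%N -> cong n (1 - 'X^M) 1.
Proof.
move=> h; have -> : 1 - 'X^M = 1 + 'X^M * (-1) :> {poly int} by ring.
exact: cong_1X.
Qed.

Lemma geo (x : {poly int}) k : (1 - x) * \sum_(j < k) x ^+ j = 1 - x ^+ k.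
Proof.
elim: k => [|k IH]; first by rewrite big_ord0 mulr0 expr0 subrr.
rewrite big_ord_recr /= mulrDr IH exprSr; ring.
Qed.

Definition g (b M : nat) : {poly int} := \sum_(j < b) 'X^(j * M).

Lemma g_geo b M : g b M = \sum_(j < b) ('X^M) ^+ j.
Proof. by apply: eq_bigr => j _; rewrite mulnC exprM. Qed.

Lemma cong_g n b M : (0 < b)%N -> (n < M)%N -> cong n (g b M) 1.
Proof.
case: b => // b _ h; rewrite g_geo big_ord_recl expr0.
have -> : \sum_(i < b) 'X^M ^+ (bump 0 i) = 'X^M * \sum_(i < b) 'X^M ^+ i :> {poly int}.
  by rewrite mulr_sumr; apply: eq_bigr => i _; rewrite exprS.
exact: cong_1X.
Qed.

Lemma cong_trunc n c N (G : nat -> {poly int}) : (c <= N)%N ->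
  (forall m, (c <= m)%N -> (m < N)%N -> cong n (G m) 1) ->
  cong n (\prod_(m < N) G m) (\prod_(m < c) G m).
Proof.
move=> hc h; rewrite -!(big_mkord xpredT) (@big_cat_nat _ _ _ c 0 N _ _ (leq0n c) hc) /=.
rewrite -{2}(mulr1 (\prod_(0 <= i < c) G i)); apply: cong_mul; first exact: cong_refl.
rewrite big_seq_cond; apply: cong_big1 => i /andP[]; rewrite mem_index_iota => /andP[h1 h2] _.
exact: h.
Qed.
Lemma reindexX c K (h : nat -> {poly int}) : (0 < c)%N ->
  \prod_(m < K) h (c * m.+1)%N =
  \prod_(M < c * K) (if (c %| M.+1)%N then h M.+1 else 1).
Proof.
case: c => // c _.
rewrite -(big_mkord xpredT (fun M => if (c.+1 %| M.+1)%N then h M.+1 else 1)).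
elim: K => [|K IH]; first by rewrite big_ord0 muln0 big_geq.
rewrite big_ord_recr /= IH.
rewrite (@big_cat_nat _ _ _ (c.+1 * K) 0 (c.+1 * K.+1)) //=; last by rewrite leq_mul2l ltnW.
congr (_ * _).
have -> : (c.+1 * K.+1 = (c.+1 * K + c).+1)%N by rewrite mulnS; lia.
rewrite big_nat_recr /=; last by rewrite leq_addr.
rewrite big_seq_cond big1 ?mul1r.
  by have -> : (c.+1 %| (c.+1 * K + c).+1)%N by rewrite -addnS dvdn_addr ?dvdn_mulr.
move=> i /andP[]; rewrite mem_index_iota => /andP[h1 h2] _.
case: ifP => // hd; exfalso; move: hd.
have -> : (i.+1 = c.+1 * K + (i.+1 - c.+1 * K))%N by lia.
rewrite dvdn_addr ?dvdn_mulr // => /dvdn_leq; lia.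
Qed.

Lemma powcount (x : {poly int}) N r :
  \prod_(i < N) (if (i <= r)%N then x else 1) = x ^+ minn N r.+1.
Proof.
elim: N => [|N IH]; first by rewrite big_ord0 min0n expr0.
rewrite big_ord_recr /= IH; case: (leqP N r) => h.
  have -> : minn N.+1 r.+1 = (minn N r.+1).+1 by lia.
  by rewrite exprSr.
have -> : minn N.+1 r.+1 = minn N r.+1 by lia.
by rewrite mulr1.
Qed.

Lemma kcount b (k : nat -> nat) N M (x : {poly int}) : (1 < b)%N ->
  (forall m : nat, (0 < m)%N ->
     exists r : nat, k m = r.+1 /\ (b ^ r %| m)%N /\ ~~ (b ^ r.+1 %| m)%N) ->
  (0 < M)%N -> (M <= N)%N ->
  x ^+ k M = \prod_(i < N) (if (b ^ i %| M)%N then x else 1).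
Proof.
move=> hb hk hM hMN; have [r [-> [h1 h2]]] := hk M hM.
have hrN : (r < N)%N.
  have := dvdn_leq hM h1; have := ltn_expl r hb; lia.
rewrite -(_ : minn N r.+1 = r.+1); last by lia.
rewrite -powcount; apply: eq_bigr => i _.
suff -> : (b ^ i %| M)%N = (i <= r)%N by [].
apply/idP/idP => hi.
  rewrite leqNgt; apply/negP => hir; move: h2; rewrite (dvdn_trans _ hi) //.
  by rewrite dvdn_exp2l.
by rewrite (dvdn_trans _ h1) // dvdn_exp2l.
Qed.

Definition D b N L : {poly int} := \prod_(m < N) (1 - 'X^(b ^ L * m.+1)).
Definition Q b N i : {poly int} := \prod_(m < N) g b (b ^ i * m.+1).

Lemma DQ b N L : D b N 0 * \prod_(i < L) Q b N i = D b N L.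
Proof.
elim: L => [|L IH]; first by rewrite big_ord0 mulr1.
rewrite big_ord_recr /= mulrA IH /D /Q -big_split /=; apply: eq_bigr => m _.
by rewrite g_geo geo -exprM expnSr mulnAC.
Qed.

Lemma Bside b k n N : (1 < b)%N ->
  (forall m : nat, (0 < m)%N ->
     exists r : nat, k m = r.+1 /\ (b ^ r %| m)%N /\ ~~ (b ^ r.+1 %| m)%N) ->
  (n <= N)%N ->
  cong n ((\prod_(m < N) (1 - 'X^(m.+1))) * \prod_(m < N) g b m.+1 ^+ k m.+1) 1.
Proof.
move=> hb hk hnN.
have -> : \prod_(m < N) (1 - 'X^(m.+1)) = D b N 0 :> {poly int}.
  by apply: eq_bigr => m _; rewrite expn0 mul1n.
have e1 : \prod_(m < N) g b m.+1 ^+ k m.+1 =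
   \prod_(i < N) \prod_(m < N) (if (b ^ i %| m.+1)%N then g b m.+1 else 1).
  rewrite exchange_big /=; apply: eq_bigr => m _; apply: kcount => //.
have c1 : cong n (\prod_(m < N) g b m.+1 ^+ k m.+1) (\prod_(i < N) Q b N i).
  rewrite e1; apply: cong_big => i _; apply: cong_sym.
  rewrite /Q reindexX; last by rewrite expn_gt0 (ltnW hb).
  apply: (@cong_trunc n N (b ^ i * N)%N (fun M => if (b ^ i %| M.+1)%N then g b M.+1 else 1)).
    by rewrite leq_pmull // expn_gt0 (ltnW hb).
  move=> m hm _; case: ifP => _; last exact: cong_refl.
  apply: cong_g; lia.
apply: (@cong_trans _ _ (D b N 0 * \prod_(i < N) Q b N i)).
  by apply: cong_mul => //; apply: cong_refl.
rewrite DQ /D; apply: cong_big1 => m _; apply: cong_1mX.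
have := ltn_expl N hb; have : (0 < m.+1)%N by [].
have := leq_pmulr (b ^ N) (ltn0Sn m); lia.
Qed.

Definition F {n : nat} (i j : 'I_n.+1) : {poly int} :=
  if ((i : nat) == 0%N) && ((j : nat) != 0%N) then 0 else 'X^(muln i j).

Lemma Acoef n : (\prod_(i < n.+1) \sum_(j < n.+1) F i j)`_n = (partition_count n)%:Z.
Proof.
rewrite bigA_distr_bigA coef_sum.
rewrite (eq_bigr (fun f : {ffun 'I_n.+1 -> 'I_n.+1} =>
   if (val (f ord0) == 0%N) && (\sum_(i < n.+1) (i * f i)%N == n) then 1 else 0)).
  rewrite -big_mkcond /= sumr_const /partition_count cardsE.
  by rewrite -natz.
move=> f _.
case: eqP => h0 /=.
  rewrite (eq_bigr (fun i : 'I_n.+1 => 'X^(muln i (f i)))); last first.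
    move=> i _; rewrite /F; case: eqP => //= hi.
    have -> : i = ord0 by apply: val_inj. by rewrite h0.
  rewrite -(big_morph (fun m => 'X^m : {poly int}) (fun x y => exprD 'X x y) (expr0 'X)).
  by rewrite coefXn eq_sym; case: eqP.
rewrite (bigD1 ord0) //= /F /=; case: eqP => // _.
by rewrite mul0r coef0.
Qed.

Lemma Aprod n : \prod_(i < n.+1) \sum_(j < n.+1) F i j = \prod_(m < n) g n.+1 m.+1.
Proof.
rewrite big_ord_recl big_ord_recl big1 ?addr0; last first.
  by move=> j _; rewrite /F /=.
rewrite /F /= mul0n expr0 mul1r; apply: eq_bigr => m _; apply: eq_bigr => j _.
by rewrite /= mulnC.
Qed.

Lemma Aside n N : (n <= N)%N ->
  cong n ((\prod_(m < n) g n.+1 m.+1) * \prod_(m < N) (1 - 'X^(m.+1))) 1.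
Proof.
move=> hnN.
apply: (@cong_trans _ _ ((\prod_(m < n) g n.+1 m.+1) * \prod_(m < n) (1 - 'X^(m.+1)))).
  apply: cong_mul; first exact: cong_refl.
  apply: (@cong_trunc n n N (fun m => 1 - 'X^(m.+1))) => // m hm _.
  by apply: cong_1mX.
rewrite -big_split /=; apply: cong_big1 => m _.
rewrite mulrC g_geo geo -exprM; apply: cong_1mX.
by rewrite mulSn; lia.
Qed.

Theorem theorem3 (b : nat) (k : nat -> nat) :
  (1 < b)%N ->
  (forall m : nat, (0 < m)%N ->
     exists r : nat, k m = r.+1 /\ (b ^ r %| m)%N /\ ~~ (b ^ r.+1 %| m)%N) ->
  forall N n : nat, (n <= N)%N ->
    ((partition_count n)%:Z =
       (\prod_(1 <= m < N.+1) (\sum_(j < b) 'X^(j * m)) ^+ k m : {poly int})`_n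
     %[mod (b%:Z)])%Z.
Proof.
move=> hb hk N n hnN.
have -> : (\prod_(1 <= m < N.+1) (\sum_(j < b) 'X^(j * m)) ^+ k m : {poly int})
   = \prod_(m < N) g b m.+1 ^+ k m.+1.
  rewrite -(add0n 1%N) big_addn subn1 /= big_mkord; apply: eq_bigr => m _.
  by rewrite addn1.
rewrite -Acoef Aprod.
set A := \prod_(m < n) g n.+1 m.+1.
set D0 := \prod_(m < N) (1 - 'X^(m.+1)) : {poly int}.
set P := \prod_(m < N) g b m.+1 ^+ k m.+1.
have hB := @Bside b k n N hb hk hnN; have hA := @Aside n N hnN.
have : cong n A P.
  apply: (@cong_trans _ _ (A * (D0 * P))).
    rewrite -{1}(mulr1 A); apply: cong_mul; [exact: cong_refl | exact: cong_sym].
  rewrite mulrA -{2}(mul1r P); apply: cong_mul => //; exact: cong_refl.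
by move=> /cong_coef ->.
Qed.
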